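(* Let $p$ be a prime and $e_1\ge e_2$ positive integers with $e=e_1+e_2$ and $p\nmid(e-1)(e_1-1)(e_2-1)$. Let $pw$ be the smallest multiple of $p$ that is $\ge e_1$. Suppose $\lfloor\frac{e-1}{p}\rfloor>\lfloor\frac{e_1-1}{p}\rfloor+\lfloor\frac{e_2-1}{p}\rfloor$. Then $p\nmid\binom{e_2-1}{pw-e_1}$, $p\nmid\binom{e_2-1}{pw-e_1+1}$, and $p\nmid Z$, where $Z=\sum_{k=0}^{pw-e_1}\binom{e_2-1}{k}(-1)^{e_2-1-k}$. *)

(* Defs.v *)
From mathcomp Require Import all_boot all_algebra.
Set Implicit Arguments. Unset Strict Implicit. Unset Printing Implicit Defensive.
Import GRing.Theory Num.Theory.

Definition least_mult_ge (p e1 : nat) : nat := p * ((e1 + p.-1) %/ p).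

Definition Zsum (e2 m : nat) : int :=
  (\sum_(0 <= k < m.+1) (-1) ^+ (e2.-1 - k) * ('C(e2.-1, k))%:Z)%R.

(* Main.v *)
Require Import Defs.
From mathcomp Require Import all_boot all_algebra.
From mathcomp Require Import zify ring lra.
Import GRing.Theory Num.Theory.

Lemma ffact_ndvd (p k : nat) : forall n, prime p ->
  (forall i, i < k -> ~~ (p %| n - i)) -> ~~ (p %| n ^_ k).
Proof.
elim: k => [|k IH] n pp H.
  by rewrite ffactn0 dvdn1; case: eqP pp => // ->.
rewrite ffactnS Euclid_dvdM // negb_or; apply/andP; split.
  by have := H 0 isT; rewrite subn0.
apply: IH => // i ltik.
have -> : n.-1 - i = n - i.+1 by lia.
by apply: H.
Qed.

Lemma bin_ndvd (p B s k : nat) : prime p -> s < p -> k <= s ->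
  ~~ (p %| 'C(B * p + s, k)).
Proof.
move=> pp sp ks.
have : ~~ (p %| (B * p + s) ^_ k).
  apply: ffact_ndvd => // i ik.
  have -> : B * p + s - i = B * p + (s - i) by lia.
  rewrite dvdn_addr ?dvdn_mull // gtnNdvd //; lia.
apply: contra => H; rewrite -bin_ffact; exact: dvdn_mulr.
Qed.

Lemma sum_alt (b m : nat) : m < b ->
  (\sum_(0 <= k < m.+1) (-1) ^+ (b - k) * ('C(b, k))%:Z)%R =
  ((-1) ^+ (b - m) * ('C(b.-1, m))%:Z)%R.
Proof.
elim: m => [|m IH] lt.
  by rewrite big_nat1 !bin0.
rewrite big_nat_recr //= IH; last lia.
case: b lt {IH} => [//|c] lt /=.
have -> : c.+1 - m = (c.+1 - m.+1).+1 by lia.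
rewrite binS PoszD exprS; ring.
Qed.

Theorem lemma5p4 (p e1 e2 : nat) :
  prime p -> 0 < e2 -> e2 <= e1 ->
  let e := e1 + e2 in
  ~~ (p %| (e - 1) * (e1 - 1) * (e2 - 1)) ->
  (e - 1) %/ p > (e1 - 1) %/ p + (e2 - 1) %/ p ->
  let pw := least_mult_ge p e1 in
  [/\ ~~ (p %| 'C(e2 - 1, pw - e1)),
      ~~ (p %| 'C(e2 - 1, pw - e1 + 1)) &
      ~~ (p%:Z %| Zsum e2 (pw - e1))%Z].
Proof.
move=> pp e2p le e ndv hdiv pw.
have p0 : 0 < p by apply: prime_gt0.
rewrite !Euclid_dvdM // !negb_or in ndv.
case/andP: ndv => /andP [nde nda] ndb.
have ea : e1 - 1 = (e1 - 1) %/ p * p + (e1 - 1) %% p := divn_eq _ p.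
have eb : e2 - 1 = (e2 - 1) %/ p * p + (e2 - 1) %% p := divn_eq _ p.
have rp : (e1 - 1) %% p < p by rewrite ltn_mod.
have sp : (e2 - 1) %% p < p by rewrite ltn_mod.
move: ea eb rp sp hdiv nda ndb.
move: ((e1 - 1) %/ p) ((e1 - 1) %% p) ((e2 - 1) %/ p) ((e2 - 1) %% p) => A r B s.
move=> ea eb rp sp hdiv nda ndb.
have r0 : 0 < r.
  rewrite lt0n; apply: contra nda => /eqP r0.
  by rewrite ea r0 addn0 dvdn_mull.
have s0 : 0 < s.
  rewrite lt0n; apply: contra ndb => /eqP s0.
  by rewrite eb s0 addn0 dvdn_mull.
have ee : e - 1 = (A + B) * p + (r + s + 1).
  rewrite /e; clear -ea eb le e2p; lia.
have rs : p < r + s + 1.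
  case: (ltngtP (r + s + 1) p) => // h.
  - move: hdiv; rewrite ee divnMDl // divn_small //; lia.
  - move: nde; rewrite ee dvdn_addr ?dvdn_mull // h dvdnn //.
clear hdiv nde nda ndb.
have epw : pw = (A + 1) * p.
  rewrite /pw /least_mult_ge.
  have -> : e1 + p.-1 = (A + 1) * p + r by lia.
  rewrite divnMDl // divn_small // addn0; lia.
have em : pw - e1 = p - r - 1 by rewrite epw; lia.
rewrite em eb; split.
- apply: bin_ndvd => //; lia.
- apply: bin_ndvd => //; lia.
- rewrite /Zsum.
  have -> : e2.-1 = B * p + s by lia.
  rewrite sum_alt; last lia.
  rewrite dvdzE abszMsign /=.
  have -> : (B * p + s).-1 = B * p + (s - 1) by lia.
  apply: bin_ndvd => //; lia.
Qed.
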